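(* A morphism $(f,\varphi):(X_1,\kappa_1,A_1)\to(X_2,\kappa_2,A_2)$ of $\mathbf{Sys}(L)$ is a monomorphism in $\mathbf{Sys}(L)$ if and only if the map $f:X_1\to X_2$ is injective and the homomorphism $\varphi:A_2\to A_1$ is an epimorphism in $\mathbf{A}$ (i.e. $(f,\varphi)$ is a monomorphism in $\mathbf{Set}\times\mathbf{A}^{op}$).
   Context: Fix a variety $\mathbf{A}$ of algebras (full subcategory of the category of $\Omega$-algebras and homomorphisms closed under products, subalgebras and homomorphic images); standing assumptions of the paper: $\mathbf{A}$ has set-indexed coproducts and a free algebra over a singleton. Fix an $\mathbf{A}$-algebra $L$; $L^X$ is the power algebra (so $L^{\varnothing}$ is a one-element algebra). An affine system is $(X,\kappa,A)$ with $X$ a set, $A$ an algebra, $\kappa:A\to L^X$ a homomorphism; a morphism $(f,\varphi):(X_1,\kappa_1,A_1)\to(X_2,\kappa_2,A_2)$ is a map $f:X_1\to X_2$ with a homomorphism $\varphi:A_2\to A_1$ such that $\kappa_1(\varphi(a))(x)=\kappa_2(a)(f(x))$ for all $a\in A_2,x\in X_1$; composition $(g,\psi)\circ(f,\varphi)=(g\circ f,\varphi\circ\psi)$. This category is $\mathbf{Sys}(L)$. *)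

(* Defs.v *)
From Stdlib Require Fin.

Set Implicit Arguments.

Record Signature := {
  op : Type;
  arity : op -> nat
}.

Record Alg (S : Signature) := {
  carrier :> Type;
  ops : forall o : op S, (Fin.t (arity S o) -> carrier) -> carrier
}.
Arguments ops {S} a o args.

Record Hom (S : Signature) (A B : Alg S) := {
  hfun :> A -> B;
  hfun_ops : forall (o : op S) (args : Fin.t (arity S o) -> A),
      hfun (ops A o args) = ops B o (fun i => hfun (args i))
}.

Definition hom_comp (S : Signature) (A B C : Alg S) (g : Hom B C) (f : Hom A B)
  : Hom A C.
Proof.
  refine {| hfun := fun x => g (f x) |}.
  intros o args. rewrite (hfun_ops f), (hfun_ops g). reflexivity.
Defined.

Definition prod_alg (S : Signature) (I : Type) (F : I -> Alg S) : Alg S :=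
  {| carrier := forall i, F i;
     ops := fun o args i => ops (F i) o (fun k => args k i) |}.

Arguments Alg : clear implicits.
Definition op_closed (S : Signature) (A : Alg S) (P : A -> Prop) : Prop :=
  forall (o : op S) (args : Fin.t (arity S o) -> A),
    (forall k, P (args k)) -> P (ops A o args).

Definition sub_alg (S : Signature) (A : Alg S) (P : A -> Prop)
  (HP : op_closed A P) : Alg S :=
  {| carrier := { x : A | P x };
     ops := fun o args =>
       exist _ (ops A o (fun k => proj1_sig (args k)))
             (HP o _ (fun k => proj2_sig (args k))) |}.

Record Variety (S : Signature) := {
  inV :> Alg S -> Prop;
  V_prod : forall (I : Type) (F : I -> Alg S),
      (forall i, inV (F i)) -> inV (prod_alg F);
  V_sub : forall (A : Alg S) (P : A -> Prop) (HP : op_closed A P),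
      inV A -> inV (sub_alg HP);
  V_hom_image : forall (A B : Alg S) (h : Hom A B),
      inV A -> (forall b : B, exists a : A, h a = b) -> inV B
}.

Definition has_coproducts (S : Signature) (V : Variety S) : Prop :=
  forall (I : Type) (F : I -> Alg S), (forall i, V (F i)) ->
  exists (C : Alg S) (inj : forall i, Hom (F i) C),
    V C /\
    forall (B : Alg S), V B -> forall (g : forall i, Hom (F i) B),
      exists u : Hom C B,
        (forall i x, u (inj i x) = g i x) /\
        (forall u' : Hom C B, (forall i x, u' (inj i x) = g i x) ->
                              forall c, u' c = u c).

Definition has_free_singleton (S : Signature) (V : Variety S) : Prop :=
  exists (F : Alg S) (gen : F),
    V F /\
    forall (B : Alg S), V B -> forall b : B,
      exists u : Hom F B, u gen = b /\
        (forall u' : Hom F B, u' gen = b -> forall c, u' c = u c).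

Definition is_epi (S : Signature) (V : Variety S) (A B : Alg S) (phi : Hom A B)
  : Prop :=
  forall (C : Alg S), V C -> forall u v : Hom B C,
    (forall a, u (phi a) = v (phi a)) -> forall b, u b = v b.

Definition pow_alg (S : Signature) (L : Alg S) (X : Type) : Alg S :=
  prod_alg (fun _ : X => L).

Record System (S : Signature) (V : Variety S) (L : Alg S) := {
  sX : Type;
  sA : Alg S;
  sA_in : V sA;
  skappa : Hom sA (pow_alg L sX)
}.

Record SysMor (S : Signature) (V : Variety S) (L : Alg S)
  (T1 T2 : System V L) := {
  mf : sX T1 -> sX T2;
  mphi : Hom (sA T2) (sA T1);
  m_compat : forall (a : sA T2) (x : sX T1),
      skappa T1 (mphi a) x = skappa T2 a (mf x)
}.

Definition sysmor_comp (S : Signature) (V : Variety S) (L : Alg S)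
  (T1 T2 T3 : System V L) (g : SysMor T2 T3) (f : SysMor T1 T2)
  : SysMor T1 T3.
Proof.
  refine {| mf := fun x => mf g (mf f x);
            mphi := hom_comp (mphi f) (mphi g) |}.
  intros a x. simpl. rewrite (m_compat f), (m_compat g). reflexivity.
Defined.

Definition sysmor_eq (S : Signature) (V : Variety S) (L : Alg S)
  (T1 T2 : System V L) (f g : SysMor T1 T2) : Prop :=
  (forall x, mf f x = mf g x) /\ (forall a, mphi f a = mphi g a).

Definition sys_mono (S : Signature) (V : Variety S) (L : Alg S)
  (T1 T2 : System V L) (m : SysMor T1 T2) : Prop :=
  forall (T0 : System V L) (g h : SysMor T0 T1),
    sysmor_eq (sysmor_comp m g) (sysmor_comp m h) -> sysmor_eq g h.

(* Main.v *)
Require Import Defs.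
From Stdlib Require Import FunctionalExtensionality.
Set Implicit Arguments.

Definition const_hom (S : Signature) (L : Alg S) : Hom L (pow_alg L unit).
Proof.
  refine {| hfun := (fun (l : L) (_ : unit) => l) : L -> pow_alg L unit |}.
  intros o args. reflexivity.
Defined.

Definition empty_hom (S : Signature) (L C : Alg S) : Hom C (pow_alg L Empty_set).
Proof.
  refine {| hfun := (fun (c : C) (e : Empty_set) => match e return L with end) : C -> pow_alg L Empty_set |}.
  intros o args. apply functional_extensionality_dep. intros [].
Defined.

Definition eval_hom (S : Signature) (L : Alg S) (X : Type) (A : Alg S)
  (k : Hom A (pow_alg L X)) (x : X) : Hom A L.
Proof.
  refine {| hfun := fun a => k a x |}.
  intros o args. rewrite (hfun_ops k). reflexivity.
Defined.

Theorem proposition7 (S : Signature) (V : Variety S)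
  (Hcoprod : has_coproducts V) (Hfree : has_free_singleton V)
  (L : Alg S) (HL : V L)
  (T1 T2 : System V L) (m : SysMor T1 T2) :
  sys_mono m <->
  ((forall x y : sX T1, mf m x = mf m y -> x = y) /\ is_epi V (mphi m)).
Proof.
  split.
  - intros Hm. split.
    + intros x y Hxy.
      set (T0 := (@Build_System S V L unit L HL (const_hom L))
             : System V L).
      assert (cg : forall (z : sX T1) (a : sA T1) (t : sX T0),
                 skappa T0 (eval_hom (skappa T1) z a) t
                 = skappa T1 a ((fun _ => z) t)) by reflexivity.
      set (g := {| mf := fun _ : sX T0 => x; mphi := eval_hom (skappa T1) x;
                   m_compat := cg x |} : SysMor T0 T1).
      set (h := {| mf := fun _ : sX T0 => y; mphi := eval_hom (skappa T1) y;
                   m_compat := cg y |} : SysMor T0 T1).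
      destruct (Hm T0 g h) as [H1 _].
      * split; simpl.
        -- intros _. exact Hxy.
        -- intros a. rewrite !(m_compat m). rewrite Hxy. reflexivity.
      * exact (H1 tt).
    + intros C HC u v Huv.
      set (T0 := (@Build_System S V L Empty_set C HC (empty_hom L C))
             : System V L).
      assert (cg : forall (w : Hom (sA T1) C) (a : sA T1) (t : sX T0),
                 skappa T0 (w a) t = skappa T1 a (match t with end)) by (intros w a []).
      set (g := {| mf := fun t : sX T0 => match t with end; mphi := u;
                   m_compat := cg u |} : SysMor T0 T1).
      set (h := {| mf := fun t : sX T0 => match t with end; mphi := v;
                   m_compat := cg v |} : SysMor T0 T1).
      destruct (Hm T0 g h) as [_ H2].
      * split; simpl.
        -- intros [].
        -- exact Huv.
      * exact H2.
  - intros [Hinj Hepi] T0 g h [H1 H2]. split.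
    + intros x. apply Hinj. exact (H1 x).
    + intros b. exact (Hepi (sA T0) (sA_in T0) (mphi g) (mphi h) H2 b).
Qed.
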